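(* Let $S\subset\mathbb{R}^n$ be a nonempty nearly convex set, let $\varphi\colon\mathbb{R}^n\to\overline{\mathbb{R}}$ be a nearly convex function bounded from below on $S$, and assume $$\mathrm{ri}(\mathrm{dom}\, \varphi)\cap\mathrm{ri}\, S\neq \emptyset.$$ Let $\varepsilon>0$. Then $\bar x\in S$ is an $\varepsilon$-solution of the problem $\inf\{\varphi(x)\mid x\in S\}$ if and only if there exist $\varepsilon_1, \varepsilon_2\geq 0$ with $\varepsilon_1+\varepsilon_2=\varepsilon$ such that $$0\in \partial_{\varepsilon_1}\varphi(\bar x)+ N_{\varepsilon_2}(\bar x; S).$$
   Context: A set $D$ is nearly convex if there is a convex $E$ with $E\subset D\subset\overline{E}$; a function is nearly convex if its epigraph $\{(x,\alpha)\mid\alpha\ge\varphi(x)\}$ is nearly convex; $\mathrm{dom}\,\varphi=\{x\mid\varphi(x)<\infty\}$. $\mathrm{ri}\,D=\{a\in D\mid\exists\delta>0,\ B(a;\delta)\cap\mathrm{aff}\,D\subset D\}$. A point $\bar x\in S$ is an $\varepsilon$-solution of $\inf\{\varphi(x)\mid x\in S\}$ if $\varphi(\bar x)\le\varphi(x)+\varepsilon$ for all $x\in S$. $\partial_\varepsilon\varphi(\bar x)=\{\xi\mid\langle\xi,x-\bar x\rangle-\varepsilon\le\varphi(x)-\varphi(\bar x)\ \forall x\in\mathbb{R}^n\}$ and $N_\varepsilon(\bar x;S)=\{\xi\mid\langle\xi,x-\bar x\rangle\le\varepsilon\ \forall x\in S\}$. *)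

(* Defs.v *)
From HB Require Import structures.
From mathcomp Require Import all_boot all_order all_algebra.
From mathcomp Require Import boolp classical_sets reals constructive_ereal.
Set Implicit Arguments. Unset Strict Implicit. Unset Printing Implicit Defensive.
Import Order.TTheory GRing.Theory Num.Theory.
Local Open Scope classical_set_scope.
Local Open Scope ring_scope.

Section Defs.
Variable R : realType.

Definition dotv (k : nat) (u v : 'rV[R]_k) : R := \sum_(i < k) u 0 i * v 0 i.
Definition enorm (k : nat) (u : 'rV[R]_k) : R := Num.sqrt (dotv u u).

Definition eclosure (k : nat) (D : set 'rV[R]_k) : set 'rV[R]_k :=
  [set x | forall e : R, 0 < e -> exists2 y, D y & enorm (x - y) < e].

Definition convex_set (k : nat) (E : set 'rV[R]_k) : Prop :=
  forall x y t, E x -> E y -> 0 <= t -> t <= 1 -> E (t *: x + (1 - t) *: y).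

Definition nearly_convex_set (k : nat) (D : set 'rV[R]_k) : Prop :=
  exists E, convex_set E /\ E `<=` D /\ D `<=` eclosure E.

(* epigraph of phi, as a subset of R^(n+1) = R^n x R *)
Definition epi (n : nat) (phi : 'rV[R]_n -> \bar R) : set 'rV[R]_(n + 1) :=
  [set z | (phi (lsubmx z) <= ((rsubmx z) 0 0)%:E)%E].

Definition nearly_convex_fun (n : nat) (phi : 'rV[R]_n -> \bar R) : Prop :=
  nearly_convex_set (epi phi).

Definition dom (n : nat) (phi : 'rV[R]_n -> \bar R) : set 'rV[R]_n :=
  [set x | (phi x < +oo)%E].

Definition aff (k : nat) (D : set 'rV[R]_k) : set 'rV[R]_k :=
  [set x | exists m (l : 'I_m -> R) (y : 'I_m -> 'rV[R]_k),
     (forall i, D (y i)) /\ \sum_(i < m) l i = 1 /\ x = \sum_(i < m) l i *: y i].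

Definition ri (k : nat) (D : set 'rV[R]_k) : set 'rV[R]_k :=
  [set a | D a /\ exists2 d : R, 0 < d &
     forall x, enorm (x - a) < d -> aff D x -> D x].

Definition bounded_below_on (n : nat) (phi : 'rV[R]_n -> \bar R) (S : set 'rV[R]_n)
  : Prop := exists m : R, forall x, S x -> (m%:E <= phi x)%E.

Definition eps_solution (n : nat) (phi : 'rV[R]_n -> \bar R) (S : set 'rV[R]_n)
  (eps : R) (xbar : 'rV[R]_n) : Prop :=
  S xbar /\ forall x, S x -> (phi xbar <= phi x + eps%:E)%E.

(* eps-subdifferential; empty when phi xbar is not finite (standard convention);
   for finite phi xbar the inequality is
   <xi, x - xbar> - eps <= phi x - phi xbar, rewritten without ereal subtraction *)
Definition eps_subdiff (n : nat) (phi : 'rV[R]_n -> \bar R) (eps : R)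
  (xbar : 'rV[R]_n) : set 'rV[R]_n :=
  [set xi | phi xbar \is a fin_num /\
     forall x, ((dotv xi (x - xbar) - eps + fine (phi xbar))%:E <= phi x)%E].

Definition eps_normal (n : nat) (S : set 'rV[R]_n) (eps : R) (xbar : 'rV[R]_n)
  : set 'rV[R]_n :=
  [set xi | forall x, S x -> dotv xi (x - xbar) <= eps].

End Defs.

(* Main.v *)
Require Import Defs.
From HB Require Import structures.
From mathcomp Require Import all_boot all_order all_algebra.
From mathcomp Require Import boolp classical_sets reals constructive_ereal.
From mathcomp Require Import ring lra.
Import Order.TTheory GRing.Theory Num.Theory.
Local Open Scope classical_set_scope.
Local Open Scope ring_scope.
Set Implicit Arguments. Unset Strict Implicit.

Section Aux.
Variable R : realType.
Implicit Types (k : nat).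

Lemma dotvDr k (a u v : 'rV[R]_k) : dotv a (u + v) = dotv a u + dotv a v.
Proof. rewrite /dotv -big_split; apply: eq_bigr => i _; rewrite mxE. by rewrite mulrDr. Qed.
Lemma dotvZr k (a u : 'rV[R]_k) s : dotv a (s *: u) = s * dotv a u.
Proof. rewrite /dotv mulr_sumr; apply: eq_bigr => i _; rewrite mxE /=; ring. Qed.
Lemma dotvNr k (a u : 'rV[R]_k) : dotv a (- u) = - dotv a u.
Proof. rewrite /dotv -sumrN; apply: eq_bigr => i _; rewrite mxE /=; ring. Qed.
Lemma dotvBr k (a u v : 'rV[R]_k) : dotv a (u - v) = dotv a u - dotv a v.
Proof. by rewrite dotvDr dotvNr. Qed.
Lemma dotvNl k (a u : 'rV[R]_k) : dotv (- a) u = - dotv a u.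
Proof. rewrite /dotv -sumrN; apply: eq_bigr => i _; rewrite mxE /=; ring. Qed.
Lemma dotv0l k (u : 'rV[R]_k) : dotv 0 u = 0.
Proof. rewrite /dotv big1 // => i _; rewrite mxE /=; ring. Qed.

Lemma dotv_ge0 k (u : 'rV[R]_k) : 0 <= dotv u u.
Proof. by apply: sumr_ge0 => i _; rewrite -expr2 sqr_ge0. Qed.

Lemma coord_le_enorm k (u : 'rV[R]_k) i : `|u 0 i| <= enorm u.
Proof.
rewrite /enorm -sqrtr_sqr ler_sqrt ?dotv_ge0 // /dotv (bigD1 i) //= expr2.
by rewrite lerDl; apply: sumr_ge0 => j _; rewrite -expr2 sqr_ge0.
Qed.

Lemma enorm_ge0 k (u : 'rV[R]_k) : 0 <= enorm u.
Proof. exact: sqrtr_ge0. Qed.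

Lemma sum_bound k (u : 'rV[R]_k) (f : 'I_k -> R) :
  `|\sum_i u 0 i * f i| <= (\sum_i `|f i|) * enorm u.
Proof.
apply: le_trans (ler_norm_sum _ _ _) _; rewrite mulr_suml.
apply: ler_sum => i _; rewrite normrM mulrC ler_wpM2l //.
exact: coord_le_enorm.
Qed.

Lemma dotv_bound k (a u : 'rV[R]_k) :
  `|dotv a u| <= (\sum_i `|a 0 i|) * enorm u.
Proof.
rewrite /dotv (eq_bigr (fun i => u 0 i * a 0 i)) => [|i _]; last by rewrite mulrC.
exact: sum_bound.
Qed.

Lemma mul_bound k m (u : 'rV[R]_k) (K : 'M[R]_(k, m)) j :
  `|(u *m K) 0 j| <= (\sum_i `|K i j|) * enorm u.
Proof. rewrite mxE; exact: sum_bound. Qed.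

Definition n1 k (u : 'rV[R]_k) := \sum_i `|u 0 i|.
Arguments n1 {k}.

Lemma n1_ge0 k (u : 'rV[R]_k) : 0 <= n1 u.
Proof. by apply: sumr_ge0. Qed.

Lemma n1D k (u v : 'rV[R]_k) : n1 (u + v) <= n1 u + n1 v.
Proof. rewrite /n1 -big_split; apply: ler_sum => i _; rewrite mxE; exact: ler_normD. Qed.

Lemma n1Z k (u : 'rV[R]_k) s : n1 (s *: u) = `|s| * n1 u.
Proof. rewrite /n1 mulr_sumr; apply: eq_bigr => i _; by rewrite mxE normrM. Qed.

Lemma n1N k (u : 'rV[R]_k) : n1 (- u) = n1 u.
Proof. by apply: eq_bigr => i _; rewrite mxE normrN. Qed.

Lemma enorm_le_n1 k (u : 'rV[R]_k) : enorm u <= n1 u.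
Proof.
rewrite /enorm -[n1 u]ger0_norm ?n1_ge0 // -sqrtr_sqr ler_sqrt ?sqr_ge0 //.
rewrite /dotv /n1.
pose K (x y : R) := x <= y ^+ 2 /\ 0 <= y.
suff [] : K (\sum_i u 0 i * u 0 i) (\sum_i `|u 0 i|) by [].
apply: big_rec2 => [|i x y _ [H1 H2]]; first by rewrite /K expr0n /=.
split; last by rewrite addr_ge0.
have h1 : u 0 i * u 0 i = `|u 0 i| ^+ 2 by rewrite real_normK ?num_real // expr2.
have h2 := normr_ge0 (u 0 i). rewrite h1; nra.
Qed.

Lemma enormZ k (u : 'rV[R]_k) s : enorm (s *: u) = `|s| * enorm u.
Proof.
rewrite /enorm.
have -> : dotv (s *: u) (s *: u) = s ^+ 2 * dotv u u.
  rewrite /dotv mulr_sumr; apply: eq_bigr => i _; rewrite !mxE; ring.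
by rewrite sqrtrM ?sqr_ge0 // sqrtr_sqr.
Qed.

Lemma enormN k (u : 'rV[R]_k) : enorm (- u) = enorm u.
Proof. by rewrite -scaleN1r enormZ normrN normr1 mul1r. Qed.

Lemma le_small (a C : R) : (forall d, 0 < d -> a <= C * d) -> a <= 0.
Proof.
move=> H; apply/ler_addgt0Pr => e e0; rewrite add0r.
have C1 : 0 < `|C| + 1 by rewrite ltr_pwDr ?normr_ge0.
set d := e / (`|C| + 1).
have d0 : 0 < d by rewrite divr_gt0.
have := H d d0; move/le_trans; apply.
have -> : e = (`|C| + 1) * d by rewrite /d mulrC -mulrA mulVf ?mulr1 // gt_eqF.
have := ler_norm C; have := normr_ge0 C; nra.
Qed.

End Aux.
Section B.
Variable R : realType.
Variable n : nat.

Lemma convex_comb (E : set 'rV[R]_n) (p0 : 'rV[R]_n) : convex_set E -> E p0 ->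
  forall k (p : 'I_k -> 'rV[R]_n) (c : 'I_k -> R),
  (forall i, E (p i)) -> (forall i, 0 <= c i) -> \sum_i c i <= 1 ->
  E (p0 + \sum_i c i *: (p i - p0)).
Proof.
move=> cE Ep0; elim => [|k IH] p c Ep c0 c1.
  by rewrite big_ord0 addr0.
rewrite big_ord_recr /=; rewrite big_ord_recr /= in c1.
set ck := c ord_max in c1 *.
have ck0 : 0 <= ck by apply: c0.
have s0 : 0 <= \sum_(i < k) c (widen_ord (leqnSn k) i) by apply: sumr_ge0.
have [ck1|ck1] := eqVneq ck 1.
  have s00 : \sum_(i < k) c (widen_ord (leqnSn k) i) = 0.
    by apply/le_anti; rewrite s0 andbT; move: c1; rewrite ck1 -{2}(add0r 1) lerD2r.
  have := psumr_eq0P (fun i _ => c0 (widen_ord (leqnSn k) i)) s00 => z.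
  rewrite big1 => [|i _]; last by rewrite z // scale0r.
  by rewrite add0r ck1 scale1r addrC subrK.
have ckl : ck < 1 by rewrite lt_neqAle ck1 /=; lra.
have d0 : 0 < 1 - ck by rewrite subr_gt0.
set c' := fun i : 'I_k => c (widen_ord (leqnSn k) i) / (1 - ck).
have Ey : E (p0 + \sum_i c' i *: (p (widen_ord (leqnSn k) i) - p0)).
  apply: IH => //.
  - by move=> i; rewrite /c' divr_ge0 // ltW.
  - rewrite /c' -mulr_suml ler_pdivrMr // mul1r; lra.
have := cE _ _ ck (Ep ord_max) Ey ck0 (ltW ckl).
congr E.
rewrite scalerDr scaler_sumr.
rewrite (eq_bigr (fun i => c (widen_ord (leqnSn k) i) *: (p (widen_ord (leqnSn k) i) - p0))); last first.
  by move=> i _; rewrite scalerA /c' mulrC -mulrA mulVf ?gt_eqF // mulr1.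
rewrite scalerBr scalerBl scale1r.
set S := \sum_(i < k) _.
rewrite /ck; move: (p ord_max) (c ord_max) => a b.
by rewrite [S + _]addrC !addrA [b *: a + p0]addrC.
Qed.

End B.
Section C.
Variable R : realType.
Variable n : nat.

Definition spanP (E : set 'rV[R]_n) p0 k :=
  exists M : 'M[R]_(k, n), row_free M /\ forall i, E (p0 + row i M).

Lemma span_basis (E : set 'rV[R]_n) p0 : E p0 ->
  exists k (M : 'M[R]_(k, n)), [/\ row_free M, (forall i, E (p0 + row i M)) &
    (forall e, E e -> (e - p0 <= M)%MS)].
Proof.
move=> Ep0.
have ex0 : exists k, `[< spanP E p0 k >].
  exists 0%N; apply/asboolP; exists 0; split; last by case.
  by rewrite /row_free mxrank0.
have ub : forall k, `[< spanP E p0 k >] -> (k <= n)%N.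
  move=> k /asboolP [M [fM _]]; move: fM; rewrite /row_free => /eqP <-.
  exact: rank_leq_col.
case: (ex_maxnP ex0 ub) => k /asboolP [M [fM EM]] kmax.
exists k, M; split => // e Ee.
apply/negPn/negP => nsub.
set v := e - p0.
have v0 : v != 0 by apply/eqP => h; move: nsub; rewrite -/v h sub0mx.
have P1 : spanP E p0 (k + 1).
  exists (col_mx M v); split.
    rewrite /row_free -(addsmxE M v).1.
    have := mxrank_sum_cap M v.
    rewrite rank_rV v0 (eqP fM).
    have : (\rank (M :&: v) <= \rank v)%N by apply: mxrankS; exact: capmxSr.
    rewrite rank_rV v0.
    have [->|] := eqVneq (\rank (M :&: v))%N 0%N; first by rewrite addn0 => _ ->.
    move=> r0 r1; exfalso.
    have ra : \rank (M :&: v) = 1%N by apply/eqP; rewrite eqn_leq r1 lt0n r0.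
    have := mxrank_leqif_sup (capmxSr M v); rewrite ra rank_rV v0.
    case => _ eqc.
    have hv : (v <= M :&: v)%MS by rewrite -eqc.
    by move: nsub; rewrite -/v (submx_trans hv (capmxSl M v)).
  move=> i; have [j hj|j hj] := splitP i.
    by rewrite (_ : i = lshift 1 j) ?rowKu //; apply: val_inj.
  rewrite (_ : i = rshift k j) ?rowKd; last by apply: val_inj.
  have -> : row j v = v by apply/rowP => l; rewrite !mxE ord1.
  by rewrite /v addrC subrK.
have := kmax _ (asboolT P1); rewrite addn1 ltnn //.
Qed.
End C.
Section D.
Variable R : realType.
Variable n : nat.
Variables (E D : set 'rV[R]_n) (p0 : 'rV[R]_n) (k : nat) (M : 'M[R]_(k, n)).
Hypotheses (cE : convex_set E) (ED : E `<=` D) (DcE : D `<=` eclosure E)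
  (fM : row_free M) (EM : forall i, E (p0 + row i M))
  (spanM : forall e, E e -> (e - p0 <= M)%MS) (Ep0 : E p0).

Definition A y := (y - p0 <= M)%MS.

Lemma coker_small (x : 'rV[R]_n) (K : 'M[R]_(n, n)) :
  (forall d, 0 < d -> exists2 e, E e & enorm (x - e) < d) ->
  (forall e, E e -> (e - p0) *m K = 0) -> (x - p0) *m K = 0.
Proof.
move=> cl EK; apply/rowP => j; rewrite [RHS]mxE; apply/eqP; rewrite -normr_le0.
apply: (@le_small _ _ (\sum_i `|K i j|)) => d d0.
have [e Ee he] := cl d d0.
have -> : x - p0 = (x - e) + (e - p0) by rewrite addrA subrK.
rewrite mulmxDl EK // addr0.
apply: le_trans (mul_bound _ _ _) _.
apply: ler_wpM2l; [exact: sumr_ge0 | exact: ltW].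
Qed.

Lemma cl_A x : eclosure E x -> A x.
Proof.
move=> cl; rewrite /A submxE; apply/eqP; apply: coker_small => // e Ee.
by apply/eqP; rewrite -submxE; apply: spanM.
Qed.

Lemma D_A x : D x -> A x.
Proof. by move=> /DcE; apply: cl_A. Qed.

Lemma A_aff y : A y -> aff E y.
Proof.
move=> Ay; set c := (y - p0) *m pinvmx M.
have hc : c *m M = y - p0 by rewrite mulmxKpV.
exists k.+1, (fun i => if unlift ord0 i is Some j then c 0 j else 1 - \sum_j c 0 j).
exists (fun i => if unlift ord0 i is Some j then p0 + row j M else p0).
split; first by move=> i; case: (unlift ord0 i).
have hl : forall i : 'I_k, unlift (@ord0 k) (lift ord0 i) = Some i by move=> i; exact: liftK.
split.
  rewrite big_ord_recl unlift_none.
  rewrite [X in _ + X](eq_bigr (fun i => c 0 i)); last by move=> i _; rewrite hl.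
  exact: subrK.
rewrite big_ord_recl unlift_none.
rewrite [X in _ = _ + X](eq_bigr (fun i => c 0 i *: (p0 + row i M))); last by move=> i _; rewrite hl.
have -> : y = p0 + c *m M by rewrite hc addrC subrK.
rewrite mulmx_sum_row.
under [X in _ = _ + X]eq_bigr => i _ do rewrite scalerDr.
rewrite big_split /= -scaler_suml scalerBl scale1r.
by rewrite addrA subrK.
Qed.

Lemma aff_mono (X Y : set 'rV[R]_n) : X `<=` Y -> aff X `<=` aff Y.
Proof.
move=> XY x [m [l [y [Hy H]]]]; exists m, l, y; split => // i; exact: XY.
Qed.

Lemma A_affD y : A y -> aff D y.
Proof. by move=> /A_aff; apply: aff_mono. Qed.


Definition hh : R := 1 / (2 * (k.+1)%:R).
Definition cb : 'rV[R]_k := const_mx hh.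
Definition bpt := p0 + cb *m M.

Lemma hh_gt0 : 0 < hh.
Proof. by rewrite /hh divr_gt0 // mulr_gt0 // ltr0Sn. Qed.

Lemma A_bpt : A bpt.
Proof. by rewrite /A /bpt addrC addKr submxMl. Qed.

Lemma interior : exists2 rho, 0 < rho & forall y, A y -> enorm (y - bpt) < rho -> E y.
Proof.
set P := pinvmx M.
set C := \sum_j \sum_i `|P i j|.
have C0 : 0 <= C by apply: sumr_ge0 => j _; apply: sumr_ge0.
have C1 : 0 < C + 1 by rewrite ltr_pwDr.
exists (hh / (C + 1)); first by rewrite divr_gt0 ?hh_gt0.
move=> y Ay hy.
set c := (y - p0) *m P.
have hc : c *m M = y - p0 by rewrite mulmxKpV.
have cbP : (cb *m M) *m P = cb.
  by apply: (row_free_inj fM); rewrite mulmxKpV // submxMl.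
have cdec : c = cb + (y - bpt) *m P.
  rewrite /c; have -> : y - p0 = (y - bpt) + cb *m M by rewrite /bpt opprD addrA subrK.
  by rewrite mulmxDl cbP addrC.
have cj : forall j, 0 <= c 0 j <= 2 * hh.
  move=> j; rewrite cdec !mxE.
  have hb : `|((y - bpt) *m P) 0 j| <= hh.
    apply: le_trans (mul_bound _ _ _) _.
    have hCj : \sum_i `|P i j| <= C.
      rewrite /C (bigD1 j) //= lerDl; apply: sumr_ge0 => l _; exact: sumr_ge0.
    have hy0 := enorm_ge0 (y - bpt).
    have hCj0 : 0 <= \sum_i `|P i j| by exact: sumr_ge0.
    have : enorm (y - bpt) * (C + 1) < hh by rewrite -ltr_pdivlMr.
    nra.
  rewrite mxE in hb.
  move: hb; rewrite ler_norml => /andP [h1 h2].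
  apply/andP; split; lra.
have ey : y = p0 + \sum_j c 0 j *: ((p0 + row j M) - p0).
  rewrite (eq_bigr (fun j => c 0 j *: row j M)); last by move=> j _; rewrite addrC addKr.
  by rewrite -mulmx_sum_row hc addrC subrK.
rewrite ey; apply: convex_comb => //.
- by move=> j; have /andP [] := cj j.
- apply: le_trans (_ : \sum_(j < k) 2 * hh <= 1).
    by apply: ler_sum => j _; have /andP [] := cj j.
  rewrite sumr_const card_ord -mulr_natl.
  have e : 2 * hh * (k.+1)%:R = 1 by rewrite /hh; field; rewrite addrC natr1 pnatr_eq0.
  have hk : (k%:R : R) <= (k.+1)%:R by rewrite ler_nat.
  have := hh_gt0; nra.
Qed.

Lemma A_add u x : A u -> (x <= M)%MS -> A (u + x).
Proof. by move=> Au Hx; rewrite /A addrAC addmx_sub. Qed.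

Lemma A_sub u v : A u -> A v -> (u - v <= M)%MS.
Proof.
move=> Au Av; have -> : u - v = (u - p0) + (-1) *: (v - p0).
  by rewrite scaleN1r opprB addrA subrK.
by rewrite addmx_sub // scalemx_sub.
Qed.

Lemma radial (z : 'rV[R]_n) d : D z -> 0 < d ->
  (forall x, enorm (x - z) < d -> aff D x -> D x) ->
  forall a, (a <= M)%MS -> exists2 t, 0 < t & E (z + t *: a).
Proof.
move=> Dz d0 Hd a Ma.
have [rho rho0 Hrho] := interior.
set b := bpt.
set N := n1 (z - b) + n1 a + 1.
have N1 : 1 <= N by rewrite /N lerDr addr_ge0 ?n1_ge0.
set s := d / (4 * (N + d)).
have s4 : s * (4 * (N + d)) = d by rewrite /s mulfVK // mulf_neq0 // gt_eqF // ltr_pwDr //; lra.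
have s0 : 0 < s by rewrite /s divr_gt0 // mulr_gt0 //; lra.
have s1 : s <= 1 by nra.
have sN : s * N <= d / 4 by rewrite ler_pdivlMr //; nra.
exists s => //.
set y := z + s *: a.
set w := y + s *: (y - b).
have Az := D_A Dz.
have Ay : A y by apply: A_add => //; exact: scalemx_sub.
have Aw : A w by apply: A_add => //; apply: scalemx_sub; apply: A_sub => //; exact: A_bpt.
have hw : enorm (w - z) < d.
  have -> : w - z = s *: a + s *: ((z - b) + s *: a).
    by rewrite /w /y; apply/rowP => i; rewrite !mxE; ring.
  apply: le_lt_trans (enorm_le_n1 _) _.
  apply: le_lt_trans (n1D _ _) _.
  rewrite !n1Z (ger0_norm (ltW s0)).
  have h := n1D (z - b) (s *: a); rewrite n1Z (ger0_norm (ltW s0)) in h.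
  have h1 := n1_ge0 (z - b); have h2 := n1_ge0 a.
  have : s * n1 a + s * n1 (z - b + s *: a) <= 2 * (s * N).
    have e1 : s * n1 (z - b + s *: a) <= s * (n1 (z - b) + s * n1 a) by rewrite ler_pM2l.
    have e2 : s * (s * n1 a) <= s * n1 a.
      by rewrite mulrA ler_wpM2r //; nra.
    rewrite /N; nra.
  nra.
have Dw : D w by apply: Hd hw _; exact: A_affD.
have [w' Ew' hw'] := DcE Dw (mulr_gt0 rho0 s0).
set b' := b + s^-1 *: (w - w').
have Ab' : A b'.
  apply: A_add; first exact: A_bpt.
  by apply: scalemx_sub; apply: A_sub => //; apply: D_A; apply: ED.
have hb' : enorm (b' - b) < rho.
  rewrite /b' addrC addKr enormZ ger0_norm ?invr_ge0 ?ltW //.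
  by rewrite ltr_pdivrMl // mulrC.
have Eb' := Hrho b' Ab' hb'.
set lam := 1 / (1 + s).
have l0 : 0 <= lam by rewrite /lam divr_ge0 // addr_ge0 // ltW.
have l1 : lam <= 1 by rewrite /lam ler_pdivrMr; lra.
have -> : y = lam *: w' + (1 - lam) *: b'.
  rewrite /b' /w /y /lam; apply/rowP => i; rewrite !mxE.
  field; rewrite ?gt_eqF //; lra.
exact: cE.
Qed.

End D.
Section F.
Variable R : realType.
Variable n : nat.

Lemma dotvDl (a b u : 'rV[R]_n) : dotv (a + b) u = dotv a u + dotv b u.
Proof. rewrite /dotv -big_split; apply: eq_bigr => i _; rewrite mxE /=; ring. Qed.
Lemma dotvZl (a u : 'rV[R]_n) s : dotv (s *: a) u = s * dotv a u.
Proof. rewrite /dotv mulr_sumr; apply: eq_bigr => i _; rewrite mxE /=; ring. Qed.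
Lemma dotv_deltal (j : 'I_n) (u : 'rV[R]_n) : dotv (delta_mx 0 j) u = u 0 j.
Proof.
rewrite /dotv (bigD1 j) //= big1 => [|i ij]; last by rewrite !mxE (negbTE ij) andbF mul0r.
by rewrite !mxE !eqxx /= mulr1n mul1r addr0.
Qed.
Lemma dotv_deltar (j : 'I_n) (u : 'rV[R]_n) : dotv u (delta_mx 0 j) = u 0 j.
Proof.
rewrite /dotv (bigD1 j) //= big1 => [|i ij]; last by rewrite !mxE (negbTE ij) andbF mulr0.
by rewrite !mxE !eqxx /= mulr1n mulr1 addr0.
Qed.
Lemma dotvC (a u : 'rV[R]_n) : dotv a u = dotv u a.
Proof. by apply: eq_bigr => i _; rewrite mulrC. Qed.

Definition supp (j : nat) (u : 'rV[R]_n) := forall i : 'I_n, (j <= i)%N -> u 0 i = 0.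

Lemma HB (p : 'rV[R]_n -> R) :
  (forall u v, p (u + v) <= p u + p v) ->
  (forall s u, 0 < s -> s * p u <= p (s *: u)) ->
  0 <= p 0 ->
  exists eta : 'rV[R]_n, forall u, dotv eta u <= p u.
Proof.
move=> pD pZ p0.
suff : forall j, (j <= n)%N -> exists eta, forall u, supp j u -> dotv eta u <= p u.
  move=> /(_ n (leqnn n)) [eta H]; exists eta => u; apply: H => i; by rewrite leqNgt ltn_ord.
elim => [_|j IH hj].
  exists 0 => u su; rewrite dotv0l.
  suff -> : u = 0 by [].
  by apply/rowP => i; rewrite (su i) // mxE.
have [eta Heta] := IH (ltnW hj).
set jj := Ordinal hj.
set ej : 'rV[R]_n := delta_mx 0 jj.
have suppD : forall u v, supp j u -> supp j v -> supp j (u + v).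
  by move=> u v su sv i ji; rewrite mxE su ?sv ?addr0.
have suppZ : forall s u, supp j u -> supp j (s *: u).
  by move=> s u su i ji; rewrite mxE su ?mulr0.
have key : forall m m', supp j m -> supp j m' ->
    dotv eta m' - p (m' - ej) <= p (m + ej) - dotv eta m.
  move=> m m' sm sm'.
  have h1 := Heta _ (suppD _ _ sm sm').
  have h2 := pD (m' - ej) (m + ej).
  rewrite (_ : m' - ej + (m + ej) = m + m') in h2; last first.
    by rewrite addrCA subrK.
  rewrite dotvDr in h1; lra.
set Lw := [set x | exists2 m, supp j m & x = dotv eta m - p (m - ej)].
have L0 : Lw !=set0.
  by exists (dotv eta 0 - p (0 - ej)); exists 0 => // i _; rewrite mxE.
have s0 : supp j 0 by move=> i _; rewrite mxE.
have Lub : ubound Lw (p (0 + ej) - dotv eta 0).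
  by move=> x [m' sm' ->]; apply: key.
have hsup : has_sup Lw by split => //; exists (p (0 + ej) - dotv eta 0).
set c := sup Lw.
have cl : forall m, supp j m -> dotv eta m - p (m - ej) <= c.
  by move=> m sm; apply: sup_upper_bound => //; exists m.
have cu : forall m, supp j m -> c <= p (m + ej) - dotv eta m.
  by move=> m sm; apply: ge_sup => // x [m' sm' ->]; apply: key.
exists (eta + (c - eta 0 jj) *: ej) => u su.
set s := u 0 jj.
set m := u - s *: ej.
have sm : supp j m.
  move=> i ji; rewrite !mxE.
  have [eij|nij] := eqVneq i jj.
    by rewrite eij eqxx /= mulr1 subrr.
  rewrite andbF mulr0 subr0.
  apply: su; rewrite ltn_neqAle ji andbT.
  by apply: contra nij => /eqP h; apply/eqP/val_inj.
have eu : u = m + s *: ej by rewrite /m; exact/esym/subrK.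
have -> : dotv (eta + (c - eta 0 jj) *: ej) u = dotv eta m + c * s.
  rewrite dotvDl dotvZl dotv_deltal -/s {1}eu dotvDr dotvZr dotv_deltar; ring.
have [sp|sn|sz] := ltgtP s 0.
- set t := - s.
  have t0 : 0 < t by rewrite /t oppr_gt0.
  have := cl (t^-1 *: m) (suppZ _ _ sm).
  rewrite dotvZr => h.
  have h2 := pZ t (t^-1 *: m - ej) t0.
  rewrite (_ : t *: (t^-1 *: m - ej) = u) in h2; last first.
    by rewrite scalerBr scalerA mulfV ?gt_eqF // scale1r eu /t scaleNr opprK.
  have : t * (t^-1 * dotv eta m - p (t^-1 *: m - ej)) <= t * c by rewrite ler_pM2l.
  rewrite mulrBr mulrA mulfV ?gt_eqF // mul1r; rewrite /t in h2 *; nra.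
- have := cu (s^-1 *: m) (suppZ _ _ sm).
  rewrite dotvZr => h.
  have h2 := pZ s (s^-1 *: m + ej) sn.
  rewrite (_ : s *: (s^-1 *: m + ej) = u) in h2; last first.
    by rewrite scalerDr scalerA mulfV ?gt_eqF // scale1r eu.
  have : s * c <= s * (p (s^-1 *: m + ej) - s^-1 * dotv eta m) by rewrite ler_pM2l.
  rewrite mulrBr mulrA mulfV ?gt_eqF // mul1r; nra.
- rewrite sz mulr0 addr0.
  have mu : m = u by rewrite /m sz scale0r subr0.
  by rewrite mu in sm *; apply: Heta.
Qed.

End F.
Section G1.
Variable R : realType.
Variable n : nat.

Lemma seg (E : set 'rV[R]_n) z a t t' : convex_set E -> E z -> E (z + t *: a) ->
  0 < t -> 0 <= t' -> t' <= t -> E (z + t' *: a).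
Proof.
move=> cE Ez Eza t0 t'0 t't.
have := cE _ _ (t' / t) Eza Ez (divr_ge0 t'0 (ltW t0)).
rewrite ler_pdivrMr // mul1r => /(_ t't).
congr E; apply/rowP => i; rewrite !mxE; field; by rewrite gt_eqF.
Qed.

Lemma core_radial (E D : set 'rV[R]_n) z d : convex_set E -> E `<=` D ->
  D `<=` eclosure E -> D z -> 0 < d ->
  (forall x, enorm (x - z) < d -> aff D x -> D x) ->
  exists k (M : 'M[R]_(k, n)), (forall e, D e -> (e - z <= M)%MS) /\
    forall a, (a <= M)%MS -> exists2 t, 0 < t &
      forall t', 0 <= t' -> t' <= t -> E (z + t' *: a).
Proof.
move=> cE ED DcE Dz d0 Hd.
have [p0 Ep0 _] := DcE z Dz 1 ltr01.
have [k [M [fM EM spM]]] := span_basis Ep0.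
exists k, M; split.
  move=> e De.
  by apply: A_sub; apply: (D_A DcE spM).
have Ez : E z.
  have [t t0] := radial cE ED DcE fM EM spM Ep0 Dz d0 Hd (sub0mx 1 M).
  by rewrite scaler0 addr0.
move=> a Ma.
have [t t0 Eza] := radial cE ED DcE fM EM spM Ep0 Dz d0 Hd Ma.
by exists t => // t' t'0 t't; apply: (seg cE Ez Eza).
Qed.

End G1.
Section G2.
Variable R : realType.
Variable n : nat.

Lemma lsub_comb (a b : 'rV[R]_(n + 1)) t :
  lsubmx (t *: a + (1 - t) *: b) = t *: lsubmx a + (1 - t) *: lsubmx b.
Proof. by apply/rowP => i; rewrite !mxE. Qed.

Lemma rsub_comb (a b : 'rV[R]_(n + 1)) t :
  rsubmx (t *: a + (1 - t) *: b) 0 0 = t * rsubmx a 0 0 + (1 - t) * rsubmx b 0 0.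
Proof. by rewrite !mxE. Qed.

Lemma lsubB (a b : 'rV[R]_(n + 1)) : lsubmx (a - b) = lsubmx a - lsubmx b.
Proof. by apply/rowP => i; rewrite !mxE. Qed.

Lemma rsubB (a b : 'rV[R]_(n + 1)) : rsubmx (a - b) 0 0 = rsubmx a 0 0 - rsubmx b 0 0.
Proof. by rewrite !mxE. Qed.

Lemma enorm_lsub (W : 'rV[R]_(n + 1)) : enorm (lsubmx W) <= enorm W.
Proof.
rewrite /enorm ler_sqrt ?dotv_ge0 // /dotv big_split_ord /=.
rewrite (eq_bigr (fun i => W 0 (lshift 1 i) * W 0 (lshift 1 i))); last by move=> i _; rewrite !mxE.
rewrite lerDl; apply: sumr_ge0 => i _; rewrite -expr2 sqr_ge0 //.
Qed.

Lemma rsub_bound (W : 'rV[R]_(n + 1)) : `|rsubmx W 0 0| <= enorm W.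
Proof. rewrite mxE; exact: coord_le_enorm. Qed.

Lemma lsub_row (x : 'rV[R]_n) r : lsubmx (row_mx x (const_mx r : 'rV[R]_1)) = x.
Proof. exact: row_mxKl. Qed.
Lemma rsub_row (x : 'rV[R]_n) r : rsubmx (row_mx x (const_mx r : 'rV[R]_1)) 0 0 = r.
Proof. by rewrite row_mxKr mxE. Qed.

End G2.
Section G3.
Variable R : realType.
Variable n : nat.
Local Open Scope ring_scope.

Lemma hard_dir (S : set 'rV[R]_n) (phi : 'rV[R]_n -> \bar R) (eps : R) (xbar : 'rV[R]_n) :
  (forall x, phi x != -oo%E) ->
  nearly_convex_set S ->
  nearly_convex_fun phi ->
  (ri (dom phi) `&` ri S) !=set0 ->
  eps_solution phi S eps xbar ->
  exists e1 e2 : R, [/\ 0 <= e1, 0 <= e2, e1 + e2 = eps &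
     exists xi1 xi2, [/\ eps_subdiff phi e1 xbar xi1,
                         eps_normal S e2 xbar xi2 & xi1 + xi2 = 0]].
Proof.
move=> phiN [ES [cES [ESS SclES]]] [Ep [cEp [Epepi epicl]]]
  [z [[domz [d1 d1pos Hd1]] [Sz [d2 d2pos Hd2]]]] [Sxbar hsol].
have finP : forall x, dom phi x -> phi x \is a fin_num.
  by move=> x; rewrite /dom /= ltey => h; rewrite fin_numE phiN.
have efin : forall x, dom phi x -> phi x = (fine (phi x))%:E.
  by move=> x /finP /fineK.
set F := [set lsubmx w | w in Ep].
have cF : convex_set F.
  move=> x y t [w1 Ew1 <-] [w2 Ew2 <-] t0 t1.
  by exists (t *: w1 + (1 - t) *: w2); [exact: cEp | exact: lsub_comb].
have FD : F `<=` dom phi.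
  move=> x [w Ew <-]; have := Epepi _ Ew; rewrite /epi /= => h.
  by rewrite /dom /=; apply: le_lt_trans h _; rewrite ltey.
have rowepi : forall x, dom phi x ->
    epi phi (row_mx x (const_mx (fine (phi x)) : 'rV[R]_1)).
  by move=> x dx; rewrite /epi /= lsub_row rsub_row -efin.
have DcF : dom phi `<=` eclosure F.
  move=> x dx e e0.
  have [w Ew hw] := epicl _ (rowepi x dx) e e0.
  exists (lsubmx w); first by exists w.
  by apply: le_lt_trans hw; rewrite -{1}(lsub_row x (fine (phi x))) -lsubB enorm_lsub.
have [kS [MS [spS radS]]] := core_radial cES ESS SclES Sz d2pos Hd2.
have [kF [MF [spF radF]]] := core_radial cF FD DcF domz d1pos Hd1.
have zES : ES z.
  have [t t0 Ht] := radS 0 (sub0mx 1 MS).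
  by have := Ht 0 (lexx 0) (ltW t0); rewrite scale0r addr0.
have domxbar : dom phi xbar.
  have h := hsol z Sz; rewrite (efin z domz) in h.
  by rewrite /dom /=; apply: le_lt_trans h _; rewrite -EFinD ltey.
set alpha := fine (phi xbar) - eps.
set G := fun (u : 'rV[R]_n) (r : R) =>
  exists w, [/\ Ep w, ES (u + lsubmx w) & rsubmx w 0 0 <= r].
have Gfib : forall r, G 0 r -> alpha <= r.
  move=> r [w [Ew ESw wr]]; rewrite add0r in ESw.
  have h1 := Epepi _ Ew; rewrite /epi /= in h1.
  have h2 := hsol _ (ESS _ ESw).
  have : (phi xbar <= (rsubmx w 0 0 + eps)%:E)%E.
    by apply: le_trans h2 _; rewrite EFinD leeD2r.
  rewrite (efin _ domxbar) lee_fin /alpha => h; lra.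
have Gconv : forall u1 u2 r1 r2 t, G u1 r1 -> G u2 r2 -> 0 <= t -> t <= 1 ->
    G (t *: u1 + (1 - t) *: u2) (t * r1 + (1 - t) * r2).
  move=> u1 u2 r1 r2 t [w1 [Ew1 ES1 h1]] [w2 [Ew2 ES2 h2]] t0 t1.
  exists (t *: w1 + (1 - t) *: w2); split.
  - exact: cEp.
  - have := cES _ _ t ES1 ES2 t0 t1; congr ES.
    by rewrite lsub_comb; apply/rowP => i; rewrite !mxE; ring.
  - rewrite rsub_comb; nra.
have GL : forall u r, G u r -> (u <= (MS + MF)%MS)%MS.
  move=> u r [w [Ew ESw _]].
  have -> : u = (u + lsubmx w - z) + (-1) *: (lsubmx w - z).
    by rewrite scaleN1r opprB addrA subrK addrK.
  apply: addmx_sub.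
    by apply: submx_trans (addsmxSl MS MF); apply: spS; apply: ESS.
  apply: scalemx_sub; apply: submx_trans (addsmxSr MS MF); apply: spF.
  by apply: FD; exists w.
have Grad : forall u, (u <= (MS + MF)%MS)%MS -> exists t r, 0 < t /\ G (t *: u) r.
  move=> u /sub_addsmxP [v ->].
  set a := v.1 *m MS; set b := v.2 *m MF.
  have [t1 t10 H1] := radS a (submxMl _ _).
  have Mb : (- b <= MF)%MS by rewrite -scaleN1r scalemx_sub // submxMl.
  have [t2 t20 H2] := radF (- b) Mb.
  have [t [t0 [tt1 tt2]]] : exists t, 0 < t /\ t <= t1 /\ t <= t2.
    by case: (leP t1 t2) => h; [exists t1 | exists t2]; split => //; split => //; apply: ltW.
  have [w Ew wb] := H2 t (ltW t0) tt2.
  exists t, (rsubmx w 0 0); split => //; exists w; split => //.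
  have := H1 t (ltW t0) tt1; congr ES.
  by rewrite wb; apply/rowP => i; rewrite !mxE; ring.
set L := (MS + MF)%MS.
set Q := fun u => [set x | exists t r, [/\ 0 < t, G (t *: u) r & x = (r - alpha) / t]].
have Qne : forall u, (u <= L)%MS -> Q u !=set0.
  move=> u /Grad [t [r [t0 Gr]]]; exists ((r - alpha) / t); exists t, r; split => //.
have QN : forall u a b, Q u a -> Q (- u) b -> 0 <= a + b.
  move=> u a b [t [r [t0 Gr ->]]] [t' [r' [t'0 Gr' ->]]].
  set lam := t' / (t + t').
  have l0 : 0 <= lam by rewrite divr_ge0 // ltW // addr_gt0.
  have l1 : lam <= 1 by rewrite ler_pdivrMr ?addr_gt0 // mul1r lerDr ltW.
  have := Gconv _ _ _ _ _ Gr Gr' l0 l1.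
  have -> : lam *: (t *: u) + (1 - lam) *: (t' *: - u) = 0.
    apply/rowP => i; rewrite !mxE /lam; field; rewrite gt_eqF // addr_gt0 //.
  move=> /Gfib h.
  have -> : (r - alpha) / t + (r' - alpha) / t' =
      ((t + t') / (t * t')) * (lam * r + (1 - lam) * r' - alpha).
    rewrite /lam; field; rewrite ?gt_eqF ?addr_gt0 //.
  by rewrite mulr_ge0 ?subr_ge0 // divr_ge0 ?mulr_ge0 ?addr_ge0 ?ltW.
have QD : forall u w a b, Q u a -> Q w b -> Q (u + w) (a + b).
  move=> u w a b [t [r [t0 Gr ->]]] [t' [r' [t'0 Gr' ->]]].
  set lam := t' / (t + t').
  have l0 : 0 <= lam by rewrite divr_ge0 // ltW // addr_gt0.
  have l1 : lam <= 1 by rewrite ler_pdivrMr ?addr_gt0 // mul1r lerDr ltW.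
  have := Gconv _ _ _ _ _ Gr Gr' l0 l1.
  have -> : lam *: (t *: u) + (1 - lam) *: (t' *: w) = (t * t' / (t + t')) *: (u + w).
    apply/rowP => i; rewrite !mxE /lam; field; rewrite gt_eqF // addr_gt0 //.
  move=> Gc; exists (t * t' / (t + t')), (lam * r + (1 - lam) * r'); split => //.
    by rewrite divr_gt0 ?mulr_gt0 ?addr_gt0.
  rewrite /lam; field; rewrite ?gt_eqF ?addr_gt0 //.
have QZ : forall u s b, 0 < s -> Q (s *: u) b -> Q u (b / s).
  move=> u s b s0 [t [r [t0 Gr ->]]].
  exists (t * s), r; split; first by rewrite mulr_gt0.
    by rewrite -scalerA.
  by rewrite invfM mulrA.
have Q1 : forall u r, G u r -> Q u (r - alpha).
  move=> u r Gr; exists 1, r; split => //; first by rewrite scale1r.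
  by rewrite divr1.
have Q0 : forall a, Q 0 a -> 0 <= a.
  move=> a [t [r [t0 Gr ->]]]; rewrite scaler0 in Gr.
  by rewrite divr_ge0 ?subr_ge0 ?Gfib // ltW.
have negL : forall u : 'rV[R]_n, (u <= L)%MS -> (- u <= L)%MS.
  by move=> u uL; rewrite -scaleN1r; apply: scalemx_sub.
set q := fun u => inf (Q u).
have Qlb : forall u, (u <= L)%MS -> has_lbound (Q u).
  move=> u uL; have [b Qb] := Qne (- u) (negL u uL).
  exists (- b) => a Qa; have := QN u a b Qa Qb; lra.
have qle : forall u a, (u <= L)%MS -> Q u a -> q u <= a.
  by move=> u a uL Qa; apply: ge_inf (Qlb u uL) _ Qa.
have qge : forall u c, (u <= L)%MS -> (forall a, Q u a -> c <= a) -> c <= q u.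
  by move=> u c uL H; apply: lb_le_inf (Qne u uL) _.
set P := proj_mx L (L^C)%MS.
have PL : forall u : 'rV[R]_n, (u *m P <= L)%MS by move=> u; exact: proj_mx_sub.
have Pid : forall u : 'rV[R]_n, (u <= L)%MS -> u *m P = u.
  by move=> u uL; apply: proj_mx_id => //; exact: capmx_compl.
set p := fun u => q (u *m P).
have pD : forall u v, p (u + v) <= p u + p v.
  move=> u v; rewrite /p mulmxDl.
  have uL := PL u; have vL := PL v.
  move: (u *m P) (v *m P) uL vL => u' v' uL vL.
  have uvL : ((u' + v')%R <= L)%MS by exact: (addmx_sub uL vL).
  have h1 : forall a b, Q u' a -> Q v' b -> q (u' + v') <= a + b.
    by move=> a b Qa Qb; apply: qle => //; apply: QD.
  have h2 : forall b, Q v' b -> q (u' + v') - b <= q u'.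
    move=> b Qb; apply: qge => // a Qa; have := h1 a b Qa Qb; lra.
  have h3 : q (u' + v') - q u' <= q v'.
    apply: qge => // b Qb; have := h2 b Qb; lra.
  lra.
have pZ : forall s u, 0 < s -> s * p u <= p (s *: u).
  move=> s u s0; rewrite /p -scalemxAl.
  have uL := PL u; move: (u *m P) uL => u' uL.
  apply: qge; first by apply: scalemx_sub.
  move=> b Qb; have h := qle u' (b / s) uL (QZ _ _ _ s0 Qb).
  by rewrite ler_pdivlMr // mulrC in h.
have p0 : 0 <= p 0.
  by rewrite /p mul0mx; apply: qge; [exact: sub0mx | exact: Q0].
have [eta Heta] := HB pD pZ p0.
have etaG : forall u r, G u r -> dotv eta u <= r - alpha.
  move=> u r Gr; apply: le_trans (Heta u) _; rewrite /p Pid; last exact: GL Gr.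
  exact: qle (GL _ _ Gr) (Q1 _ _ Gr).
set C := \sum_i `|eta 0 i|.
have C0 : 0 <= C by apply: sumr_ge0.
have etaS : forall x y, dom phi x -> S y -> dotv eta (y - x) <= fine (phi x) - alpha.
  move=> x y dx Sy.
  set r := fine (phi x).
  set wx := row_mx x (const_mx r : 'rV[R]_1).
  rewrite -subr_le0; apply: (@le_small _ _ (2 * C + 1)) => del del0.
  have [y' ESy' hy'] := SclES _ Sy del del0.
  have [w Ew hw] := epicl _ (rowepi x dx) del del0.
  have G1 : G (y' - lsubmx w) (rsubmx w 0 0) by exists w; split => //; rewrite subrK.
  have h1 := etaG _ _ G1.
  have e1 : dotv eta (y - x) =
      dotv eta (y' - lsubmx w) + dotv eta (y - y') - dotv eta (x - lsubmx w).
    rewrite !dotvBr; ring.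
  have b1 := dotv_bound eta (y - y').
  have ex : x - lsubmx w = lsubmx (wx - w) by rewrite lsubB lsub_row.
  have b2 := dotv_bound eta (x - lsubmx w).
  have b2' : enorm (x - lsubmx w) <= enorm (wx - w) by rewrite ex enorm_lsub.
  have er : r - rsubmx w 0 0 = rsubmx (wx - w) 0 0 by rewrite rsubB rsub_row.
  have b3 := rsub_bound (wx - w); rewrite -er in b3.
  have c1 : C * enorm (y - y') <= C * del by rewrite ler_wpM2l // ltW.
  have c2 : C * enorm (x - lsubmx w) <= C * del.
    by rewrite ler_wpM2l // (le_trans b2') // ltW.
  rewrite -/C in b1 b2.
  move: b1 b2 b3; rewrite !ler_norml => /andP [b1 b1'] /andP [b2 b2'' ] /andP [b3 b3'].
  rewrite e1; have := ltW hw; lra.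
set T := [set dotv eta (y - xbar) | y in S].
have Tub : ubound T eps.
  move=> v [y Sy <-]; have := etaS _ _ domxbar Sy; rewrite /alpha; lra.
have Tne : T !=set0 by exists (dotv eta (xbar - xbar)), xbar.
have hT : has_sup T by split => //; exists eps.
set c := sup T.
have cT : forall y, S y -> dotv eta (y - xbar) <= c.
  by move=> y Sy; apply: sup_upper_bound => //; exists y.
have c0 : 0 <= c by have := cT _ Sxbar; rewrite subrr /dotv big1 // => i _; rewrite mxE mulr0.
have ceps : c <= eps by apply: ge_sup.
exists (eps - c), c; split => //; first by rewrite subr_ge0.
  by rewrite subrK.
exists (- eta), eta; split; last by rewrite addNr.
- split; first exact: finP.
  move=> x; have [dx|ndx] := boolP (phi x < +oo)%E; last first.
    by move: ndx; rewrite ltey negbK => /eqP ->; rewrite leey.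
  rewrite (efin x dx) lee_fin.
  have hc : c <= fine (phi x) - alpha - dotv eta (xbar - x).
    apply: ge_sup => // v [y Sy <-].
    have := etaS _ _ dx Sy.
    have -> : y - x = (y - xbar) + (xbar - x) by rewrite addrA subrK.
    rewrite dotvDr; lra.
  have -> : dotv (- eta) (x - xbar) = dotv eta (xbar - x).
    by rewrite dotvNl -dotvNr opprB.
  rewrite /alpha in hc; lra.
- by move=> y Sy; apply: cT.
Qed.

End G3.
Unset Implicit Arguments.

Theorem mainTheorem8 (R : realType) (n : nat) (S : set 'rV[R]_n)
  (phi : 'rV[R]_n -> \bar R) (eps : R) (xbar : 'rV[R]_n) :
  (forall x, phi x != -oo%E) ->
  S !=set0 ->
  nearly_convex_set S ->
  nearly_convex_fun phi ->
  bounded_below_on phi S ->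
  (ri (dom phi) `&` ri S) !=set0 ->
  0 < eps ->
  S xbar ->
  (eps_solution phi S eps xbar <->
   exists e1 e2 : R, [/\ 0 <= e1, 0 <= e2, e1 + e2 = eps &
     exists xi1 xi2, [/\ eps_subdiff phi e1 xbar xi1,
                         eps_normal S e2 xbar xi2 & xi1 + xi2 = 0]]).
Proof.
move=> phiN Sne ncS ncphi bb rine eps0 Sxbar; split.
  exact: hard_dir phiN ncS ncphi rine.
move=> [e1 [e2 [e10 e20 esum [xi1 [xi2 [[fin Hsub] Hnorm xisum]]]]]].
split => // x Sx.
have h1 := Hsub x; have h2 := Hnorm x Sx.
have xi2E : xi2 = - xi1 by apply/eqP; rewrite -addr_eq0 addrC xisum.
rewrite xi2E dotvNl in h2.
have [px|px] := boolP (phi x < +oo)%E; last first.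
  by move: px; rewrite ltey negbK => /eqP ->; rewrite addye // leey.
have fx : phi x \is a fin_num by rewrite fin_numE phiN -ltey px.
rewrite -(fineK fx) -(fineK fin) -EFinD lee_fin.
rewrite -(fineK fx) lee_fin in h1.
lra.
Qed.
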